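(* Let $n\ge 2k\ge 4$. Let $\mathbb{S}$ be a $q$-covering design $\mathcal{C}_2(n-k+1,k,2)$ (a set of $k$-dimensional subspaces of $\mathbb{F}_2^{n-k+1}$ covering every $2$-dimensional subspace), let $U\subseteq\mathbb{F}_2^{n-k+1}$ be an $(n-k)$-dimensional subspace, and let $c=|\{X\in\mathbb{S}: X\subseteq U\}|$. Then $$\mathcal{C}_2(n,k,2)\le 2^{2(n-k)}+(2^k-1)|\mathbb{S}|-(2^k-2)c.$$
   Context: A $q$-covering design $\mathcal{C}_q(n,k,r)$ is a collection of $k$-dimensional subspaces of $\mathbb{F}_q^n$ such that every $r$-dimensional subspace of $\mathbb{F}_q^n$ is contained in at least one member; $\mathcal{C}_q(n,k,r)$ denotes the minimum size of such a collection. *)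

(* Defs.v *)
From HB Require Import structures.
From mathcomp Require Import all_boot all_order all_algebra all_fingroup all_field.
Set Implicit Arguments. Unset Strict Implicit. Unset Printing Implicit Defensive.
Import GRing.Theory.
Local Open Scope ring_scope.

Import VectorInternalTheory.
HB.instance Definition _ (K : finFieldType) (vT : vectType K) :=
  [Finite of {vspace vT} by <:].

Notation ambient K n := ('rV[K]_n) (only parsing).

Definition is_covering_design (K : finFieldType) (n k r : nat)
    (S : {set {vspace 'rV[K]_n}}) : Prop :=
  (forall X, X \in S -> \dim X = k) /\
  (forall Y : {vspace 'rV[K]_n}, \dim Y = r ->
     exists2 X, X \in S & (Y <= X)%VS).
Arguments is_covering_design K n k r S : clear implicits.

Definition is_covering_designb (K : finFieldType) (n k r : nat)
    (S : {set {vspace 'rV[K]_n}}) : bool :=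
  [forall X in S, \dim X == k] &&
  [forall Y : {vspace 'rV[K]_n}, (\dim Y == r) ==> [exists X in S, (Y <= X)%VS]].
Arguments is_covering_designb K n k r S : clear implicits.

(* C_q(n,k,r): the minimum size of a q-covering design (the default value,
   larger than any set of subspaces, only matters if no covering design
   exists, which does not happen when r <= k <= n). *)
Definition covering_number (K : finFieldType) (n k r : nat) : nat :=
  \big[minn/#|{set {vspace 'rV[K]_n}}|]_(S : {set {vspace 'rV[K]_n}}
      | is_covering_designb K n k r S) #|S|.

(* Main.v *)
Require Import Defs.
From HB Require Import structures.
From mathcomp Require Import all_boot all_order all_algebra all_fingroup all_field.
From mathcomp Require Import ring zify.
Set Implicit Arguments. Unset Strict Implicit. Unset Printing Implicit Defensive.
Import GRing.Theory.
Import VectorInternalTheory.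
Local Open Scope ring_scope.

Lemma bigmin_le (I : finType) (P : pred I) (F : I -> nat) x j :
  P j -> (\big[minn/x]_(i | P i) F i <= F j)%N.
Proof.
move=> Pj; have: j \in index_enum I by rewrite mem_index_enum.
rewrite unlock; elim: (index_enum I) => //= i r IH.
rewrite inE => /predU1P [<-|/IH]; first by rewrite Pj geq_minl.
by case: ifP => // _ H; rewrite geq_min H orbT.
Qed.

Lemma F2_cases (c : 'F_2) : c = 0 \/ c = 1.
Proof. by case: c => [[|[|//]]] Hc; [left|right]; apply: val_inj. Qed.

Definition addF (V W : zmodType) (g : V -> W) := forall x y, g (x + y) = g x + g y.

Lemma addF0 (V W : zmodType) (g : V -> W) : addF g -> g 0 = 0.
Proof. by move=> h; apply: (addrI (g 0)); rewrite -h !addr0. Qed.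

Lemma addF_F2Z (V W : lmodType 'F_2) (g : V -> W) : addF g -> forall c x, g (c *: x) = c *: g x.
Proof. by move=> h c x; case: (F2_cases c) => ->; rewrite ?scale0r ?scale1r ?addF0. Qed.

Definition matof p q (g : 'rV['F_2]_p -> 'rV['F_2]_q) : 'M_(p,q) := \matrix_(i < p) g 'e_i.

Lemma matofE p q (g : 'rV['F_2]_p -> 'rV['F_2]_q) : addF g -> forall z, z *m matof g = g z.
Proof.
move=> h z; rewrite mulmx_sum_row {2}(row_sum_delta z).
rewrite (big_morph g h (addF0 h)); apply: eq_bigr => i _.
by rewrite rowK (addF_F2Z h).
Qed.

Lemma solve2 (L : fieldType) (x1 x2 u1 u2 : L) : x1 != 0 -> x2 != 0 -> x1 != x2 ->
  exists a b, a * x1 + b * x1 ^+ 2 = u1 /\ a * x2 + b * x2 ^+ 2 = u2.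
Proof.
move=> h1 h2 h12.
have hD : x1 * x2 * (x2 - x1) != 0 by rewrite !mulf_neq0 // subr_eq0 eq_sym.
exists ((u1 * x2 ^+ 2 - u2 * x1 ^+ 2) / (x1 * x2 * (x2 - x1))).
exists ((x1 * u2 - x2 * u1) / (x1 * x2 * (x2 - x1))).
split; field; by rewrite h1 h2 subr_eq0 eq_sym h12.
Qed.

Lemma castmxD (R : zmodType) m n n' (e : n = n') (A B : 'M[R]_(m, n)) :
  castmx (erefl m, e) (A + B) = castmx (erefl m, e) A + castmx (erefl m, e) B.
Proof. by case: n' / e; rewrite !castmx_id. Qed.

Lemma castmx_inj (R : Type) m n n' (e : n = n') : injective (@castmx R m n m n' (erefl m, e)).
Proof. by case: n' / e => A B; rewrite !castmx_id. Qed.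

Definition img p q (M : 'M['F_2]_(p,q)) (X : {vspace 'rV['F_2]_p}) : {vspace 'rV['F_2]_q} :=
  (linfun (@mulmxr _ 1%N _ _ M) @: X)%VS.

Lemma imgP p q (M : 'M['F_2]_(p,q)) (X : {vspace 'rV['F_2]_p}) v : reflect (exists2 z, z \in X & v = z *m M) (v \in img M X).
Proof.
apply: (iffP memv_imgP) => -[z zX ->]; exists z => //; by rewrite lfunE.
Qed.

Lemma img_mem p q (M : 'M['F_2]_(p,q)) (X : {vspace 'rV['F_2]_p}) z : z \in X -> z *m M \in img M X.
Proof. by move=> zX; apply/imgP; exists z. Qed.

Lemma img_dim p q (M : 'M['F_2]_(p,q)) (X : {vspace 'rV['F_2]_p}) : (forall z : 'rV_p, z *m M = 0 -> z = 0) -> \dim (img M X) = \dim X.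
Proof.
move=> inj; apply: limg_dim_eq; apply/eqP; rewrite -subv0; apply/subvP => z.
rewrite memv_cap memv_ker lfunE /= => /andP [_ /eqP /inj ->]; exact: mem0v.
Qed.

Lemma img_dim_le p q (M : 'M['F_2]_(p,q)) (X : {vspace 'rV['F_2]_p}) : (\dim (img M X) <= \dim X)%N.
Proof. by rewrite -(limg_ker_dim (linfun (@mulmxr _ 1%N _ _ M)) X) leq_addl. Qed.

Lemma dim_full p : \dim (fullv : {vspace 'rV['F_2]_p}) = p.
Proof. by rewrite dimvf /dim /= mul1n. Qed.

Lemma hyper_family m k (U : {vspace 'rV['F_2]_(m+1)}) : \dim U = m ->
  exists phi : 'rV['F_2]_k -> 'M['F_2]_(m+1, m+k),
   [/\ forall b (z : 'rV_(m+1)), b != 0 -> z *m phi b = 0 -> z = 0,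
       forall b (a : 'rV_m) (t : 'F_2), b != 0 -> exists z, z *m phi b = row_mx a (t *: b)
     & forall b b' (z : 'rV_(m+1)), z \in U -> z *m phi b = z *m phi b'].
Proof.
move=> hU.
have [e _ eU] : exists2 e, e \in fullv & e \notin U.
  apply/subvPn; apply/negP => /dimvS; rewrite dim_full hU addn1 ltnn //.
pose X : (1 + \dim U).-tuple 'rV['F_2]_(m+1) := [tuple of e :: vbasis U].
have freeX : free X.
  by rewrite /X /= free_cons (span_basis (vbasisP U)) eU (basis_free (vbasisP U)).
have spanX : <<X>>%VS = fullv.
  apply/eqP; rewrite eqEdim subvf /= (eqnP freeX) dim_full size_tuple hU addn1 //.
pose ka (z : 'rV['F_2]_(m+1)) : 'rV['F_2]_(1 + \dim U) := \row_i coord X i z.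
have kaD : addF ka by move=> x y; apply/rowP => i; rewrite !mxE raddfD.
have kaE z : z = \sum_i (ka z) 0 i *: X`_i.
  rewrite {1}(@coord_span _ _ _ X z) ?spanX ?memvf //; apply: eq_bigr => i _; by rewrite mxE.
have kaV (w : 'rV['F_2]_(1 + \dim U)) : ka (\sum_i w 0 i *: X`_i) = w.
  by apply/rowP => j; rewrite mxE coord_sum_free.
have kaU z : z \in U -> ka z 0 ord0 = 0.
  move=> zU; rewrite mxE (coord_vbasis zU) linear_sum big1 // => i _.
  rewrite linearZ /=.
  have -> : (vbasis U)`_i = X`_(lift ord0 i) by [].
  by rewrite coord_free // mulr0.
pose la z := ka z 0 ord0.
pose th z : 'rV['F_2]_m := castmx (erefl 1%N, hU) (rsubmx (ka z)).
pose f (b : 'rV['F_2]_k) z : 'rV['F_2]_(m+k) := row_mx (th z) (la z *: b).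
have fD b : addF (f b).
  move=> x y; rewrite /f /th /la kaD add_row_mx -castmxD linearD /= mxE scalerDl //.
exists (fun b => matof (f b)); split.
- move=> b z b0; rewrite matofE //; move/eqP; rewrite row_mx_eq0 scaler_eq0 (negPf b0) orbF.
  case/andP=> /eqP th0 /eqP la0.
  rewrite (kaE z); apply: big1 => i _.
  have -> : ka z = row_mx (lsubmx (ka z)) (rsubmx (ka z)) by rewrite hsubmxK.
  have -> : rsubmx (ka z) = 0.
    by apply: (@castmx_inj _ 1%N _ _ hU); apply: (etrans th0); apply/rowP => j; rewrite castmxE !mxE.
  have -> : lsubmx (ka z) = 0.
    apply/matrixP => i0 j; rewrite !mxE !ord1 -la0 /la mxE; congr (coord X _ z); exact: val_inj.
  by rewrite mxE; case: split => ?; rewrite mxE scale0r.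
- move=> b a t b0.
  pose w : 'rV['F_2]_(1 + \dim U) := row_mx (const_mx t) (castmx (erefl 1%N, esym hU) a).
  exists (\sum_i w 0 i *: X`_i); rewrite matofE // /f /th /la kaV; congr row_mx.
    by rewrite row_mxKr castmxKV.
  congr (_ *: b); rewrite mxE; case: splitP => [j _|j /= h]; first by rewrite mxE.
  by move: h; rewrite add1n.
- move=> b b' z zU; rewrite !matofE // /f /la kaU // !scale0r //.
Qed.
Lemma mrd_family d k : (0 < d)%N -> (k <= d)%N ->
  exists Fam : seq 'M['F_2]_(k,d), (size Fam <= 2 ^ (2 * d))%N /\
   forall x1 x2 : 'rV_k, x1 != 0 -> x2 != 0 -> x1 != x2 -> forall u1 u2 : 'rV_d,
     exists2 G, G \in Fam & x1 *m G = u1 /\ x2 *m G = u2.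
Proof.
move=> d0 kd.
have [Fm chF cardF] := pPrimePowerField (isT : prime 2) d0.
pose L := pPrimeCharType chF.
have hdim : dim L = d.
  by rewrite -dimvf pprimeChar_dimf cardF pfactorK.
pose psi (l : L) : 'rV['F_2]_d := castmx (erefl 1%N, hdim) (v2r l).
pose psiV (u : 'rV['F_2]_d) : L := r2v (castmx (erefl 1%N, esym hdim) u).
have psiK u : psi (psiV u) = u by rewrite /psi /psiV r2vK castmxKV.
have psiD : addF psi by move=> x y; rewrite /psi raddfD castmxD.
have psiVD : addF psiV by move=> x y; rewrite /psiV castmxD raddfD.
have psiV_inj : injective psiV by move=> x y /r2v_inj /castmx_inj.
pose pad (x : 'rV['F_2]_k) : 'rV['F_2]_d := castmx (erefl 1%N, subnKC kd) (row_mx x (0 : 'rV_(d - k))).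
pose io x := psiV (pad x).
have ioD : addF io by move=> x y; rewrite /io /pad -psiVD -castmxD add_row_mx addr0.
have io_inj : injective io.
  move=> x y /psiV_inj /castmx_inj /eq_row_mx [] //.
have io0 : io 0 = 0 by apply: addF0.
have char2 : (2%:R : L) = 0 by apply: pcharf0.
pose g (a b : L) x := psi (a * io x + b * io x ^+ 2).
have gD a b : addF (g a b).
  move=> x y; rewrite /g -psiD ioD sqrrD -mulr_natr char2 mulr0 addr0; congr psi; ring.
exists [seq matof (g p.1 p.2) | p <- enum {: L * L}]; split.
  by rewrite size_map -cardE card_prod cardF mulnn -expnM mulnC.
move=> x1 x2 n1 n2 n12 u1 u2.
have [|||a [b [h1 h2]]] := solve2 (psiV u1) (psiV u2) (x1:=io x1) (x2:=io x2).
- by rewrite -io0 (inj_eq io_inj).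
- by rewrite -io0 (inj_eq io_inj).
- by rewrite (inj_eq io_inj).
exists (matof (g a b)); first by apply/mapP; exists (a, b); rewrite ?mem_enum.
by rewrite !matofE // /g h1 h2 !psiK.
Qed.

Lemma two_basis n (Y : {vspace 'rV['F_2]_n}) : \dim Y = 2 ->
  exists y1 y2, Y = <<[:: y1; y2]>>%VS.
Proof.
move=> hY; rewrite -(span_basis (vbasisP Y)).
case: (vbasis Y) => s; rewrite hY; case: s => [|y1 [|y2 [|]]] //= _.
by exists y1, y2.
Qed.

Lemma span2_sub n (X : {vspace 'rV['F_2]_n}) y1 y2 :
  y1 \in X -> y2 \in X -> (<<[:: y1; y2]>> <= X)%VS.
Proof.
move=> h1 h2; apply/span_subvP => y; rewrite !inE => /orP [/eqP->|/eqP->] //.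
Qed.

Lemma construction m k (hk : (2 <= k)%N) (hkm : (k <= m)%N)
  (S : {set {vspace 'rV['F_2]_(m + 1)}}) (hS : is_covering_design 'F_2 (m + 1) k 2 S)
  (U : {vspace 'rV['F_2]_(m + 1)}) (hU : \dim U = m) :
  (covering_number 'F_2 (m + k) k 2 + (2 ^ k - 2) * #|[set X in S | (X <= U)%VS]|
    <= 2 ^ (2 * m) + (2 ^ k - 1) * #|S|)%N.
Proof.
case: hS => hSd hSc.
have [Fam [hFs hF]] := mrd_family (leq_trans (ltnW hk) hkm) hkm.
have [phi [phi1 phi2 phi3]] := hyper_family k hU.
have k0 : (0 < k)%N by apply: leq_trans hk.
pose b0 : 'rV['F_2]_k := const_mx 1.
have b00 : b0 != 0.
  by apply/eqP => /rowP /(_ (Ordinal k0)); rewrite !mxE => /eqP; rewrite oner_eq0.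
pose P := [set X : {vspace 'rV['F_2]_(m + 1)} | (X <= U)%VS].
pose T1 := [set img (row_mx G 1%:M) fullv | G in Fam].
pose T2 := [set img (phi p.1) p.2 | p in setX [set b : 'rV['F_2]_k | b != 0] (S :\: P)].
pose T3 := [set img (phi b0) X | X in S :&: P].
pose T := T1 :|: T2 :|: T3.
have Tdim : forall X, X \in T -> \dim X = k.
  move=> X; rewrite !in_setU => /orP [/orP [] |].
  - case/imsetP => G _ ->; rewrite img_dim ?dim_full // => z.
    rewrite mul_mx_row mulmx1 => /eqP; rewrite row_mx_eq0 => /andP [_ /eqP] //.
  - case/imsetP => -[b X']; rewrite !inE /= => /and3P [bn _ XS] ->.
    rewrite img_dim; [exact: hSd | move=> z; exact: phi1].
  - case/imsetP => X'; rewrite !inE => /andP [XS _] ->.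
    rewrite img_dim; [exact: hSd | move=> z; exact: phi1].
have Tcov : forall Y : {vspace 'rV['F_2]_(m + k)}, \dim Y = 2 -> exists2 X, X \in T & (Y <= X)%VS.
  move=> Y hY; have [y1 [y2 eY]] := two_basis hY.
  have hsub (X : {vspace 'rV['F_2]_(m + k)}) : y1 \in X -> y2 \in X -> (Y <= X)%VS by move=> h1 h2; rewrite eY span2_sub.
  have [/and3P [n1 n2 n12] | hn] := boolP [&& rsubmx y1 != 0, rsubmx y2 != 0 & rsubmx y1 != rsubmx y2].
    have [G GF [e1 e2]] := hF _ _ n1 n2 n12 (lsubmx y1) (lsubmx y2).
    exists (img (row_mx G 1%:M) fullv).
      by rewrite !in_setU; apply/orP; left; apply/orP; left; apply/imsetP; exists G.
    apply: hsub.
      have -> : y1 = rsubmx y1 *m row_mx G 1%:M by rewrite mul_mx_row mulmx1 e1 hsubmxK.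
      by apply: img_mem; exact: memvf.
    have -> : y2 = rsubmx y2 *m row_mx G 1%:M by rewrite mul_mx_row mulmx1 e2 hsubmxK.
    by apply: img_mem; exact: memvf.
  have [b [bn [t1 [t2 [et1 et2]]]]] : exists b : 'rV['F_2]_k, (b != 0) /\ (exists t1 t2 : 'F_2, rsubmx y1 = t1 *: b /\ rsubmx y2 = t2 *: b).
    case: (eqVneq (rsubmx y1) 0) => [e1|n1]; case: (eqVneq (rsubmx y2) 0) => [e2|n2].
    + by exists b0; split => //; exists 0, 0; rewrite !scale0r.
    + by exists (rsubmx y2); split => //; exists 0, 1; rewrite scale0r scale1r.
    + by exists (rsubmx y1); split => //; exists 1, 0; rewrite scale0r scale1r.
    + move: hn; rewrite n1 n2 /= negbK => /eqP e12.
      by exists (rsubmx y1); split => //; exists 1, 1; rewrite !scale1r.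
  have [z1 ez1] := phi2 b (lsubmx y1) t1 bn.
  have [z2 ez2] := phi2 b (lsubmx y2) t2 bn.
  rewrite -et1 hsubmxK in ez1; rewrite -et2 hsubmxK in ez2.
  pose Z := <<[:: z1; z2]>>%VS.
  have z1Z : z1 \in Z by rewrite memv_span // !inE eqxx.
  have z2Z : z2 \in Z by rewrite memv_span // !inE eqxx orbT.
  have hZ : \dim Z = 2.
    apply/eqP; rewrite eqn_leq (dim_span [:: z1; z2]) /=.
    rewrite -{1}hY; apply: leq_trans (img_dim_le (phi b) Z); apply: dimvS.
    by rewrite eY span2_sub // -?ez1 -?ez2 img_mem.
  have [X XS ZX] := hSc Z hZ.
  have z1X : z1 \in X by apply: (subvP ZX).
  have z2X : z2 \in X by apply: (subvP ZX).
  case XP: (X \in P).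
    exists (img (phi b0) X).
      by rewrite !in_setU; apply/orP; right; apply/imsetP; exists X => //; rewrite inE XS XP.
    have XU : (X <= U)%VS by move: XP; rewrite inE.
    by apply: hsub; rewrite -?ez1 -?ez2 (phi3 b b0) ?img_mem // (subvP XU).
  exists (img (phi b) X).
    by rewrite !in_setU; apply/orP; left; apply/orP; right; apply/imsetP; exists (b, X) => //; move: XP; rewrite !inE bn XS => ->.
  by apply: hsub; rewrite -?ez1 -?ez2 img_mem.
have Tcard : (#|T| <= 2 ^ (2 * m) + (2 ^ k - 1) * #|S :\: P| + #|S :&: P|)%N.
  apply: (leq_trans (leq_card_setU _ _)); apply: leq_add; last exact: leq_imset_card.
  apply: (leq_trans (leq_card_setU _ _)); apply: leq_add.
    exact: (leq_trans (leq_imset_card _ _) (leq_trans (card_size _) hFs)).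
  apply: (leq_trans (leq_imset_card _ _)); rewrite cardsX.
  have -> : [set b : 'rV['F_2]_k | b != 0] = [set~ 0] by apply/setP => b; rewrite !inE.
  by rewrite cardsC1 card_mx card_Fp // mul1n subn1.
have -> : #|[set X in S | (X <= U)%VS]| = #|S :&: P|.
  by apply: eq_card => X; rewrite !inE.
have hcov : is_covering_designb 'F_2 (m + k) k 2 T.
  apply/andP; split; first by apply/forall_inP => X /Tdim ->.
  apply/forallP => Y; apply/implyP => /eqP /Tcov [X XT YX]; apply/exists_inP; by exists X.
have := @bigmin_le _ (is_covering_designb 'F_2 (m + k) k 2) (fun S => #|S|) #|{set {vspace 'rV['F_2]_(m + k)}}| T hcov.
rewrite -/(covering_number _ _ _ _) => hle.
have hS : #|S| = (#|S :&: P| + #|S :\: P|)%N by rewrite cardsID.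
have h2k : (2 <= 2 ^ k)%N by rewrite -{1}(expn1 2) leq_exp2l.
move: hle Tcard; rewrite hS; set c := #|S :&: P|; set s := #|S :\: P|; set r := (2 ^ k)%N.
move: h2k; rewrite -/r.
move: (covering_number _ _ _ _) #|T| (2 ^ (2 * m))%N => a t e.
case: r => [|[|r']] // _ h1 h2.
rewrite !subSS subn0 mulnDr; apply: (leq_trans (leq_add h1 (leqnn _))).
apply: (leq_trans (leq_add h2 (leqnn _))).
nia.
Qed.


Local Close Scope ring_scope.

Theorem mainTheorem10 (n k : nat) (hk : 2 <= k) (hn : 2 * k <= n)
    (S : {set {vspace 'rV['F_2]_(n - k + 1)}})
    (hS : is_covering_design 'F_2 (n - k + 1) k 2 S)
    (U : {vspace 'rV['F_2]_(n - k + 1)}) (hU : \dim U = n - k)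
    (c : nat) (hc : c = #|[set X in S | (X <= U)%VS]|) :
  covering_number 'F_2 n k 2 + (2 ^ k - 2) * c
    <= 2 ^ (2 * (n - k)) + (2 ^ k - 1) * #|S|.
Proof.
have hkm : (k <= n - k)%N by lia.
have := construction hk hkm hS hU.
have hkn : (k <= n)%N by lia.
by rewrite subnK ?hc.
Qed.
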